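(* Let $p,q\geq1$ be integers and let $(\vartheta(s),\alpha(s))$ be a trajectory of the differential system $$\dot\vartheta=3\sin\vartheta\cos\vartheta\sin(\alpha-\vartheta),\qquad \dot\alpha=q\cos\alpha\cos\vartheta-p\sin\alpha\sin\vartheta.$$ Suppose that for some $s_0$ one has $0<\vartheta(s_0)<\pi/2$ and $\vartheta(s_0)+\pi/2\leq\alpha(s_0)\leq\vartheta(s_0)+3\pi/2$, i.e. the trajectory is in $R_2=\{(\vartheta,\alpha):0\leq\vartheta\leq\pi/2,\ \vartheta+\pi/2\leq\alpha\leq\vartheta+3\pi/2\}$. Then the trajectory is in $R_2$ for all $s\leq s_0$. *)

(* Defs.v *)
From Stdlib Require Import Reals.
Open Scope R_scope.

Definition is_trajectory (p q : nat) (th al : R -> R) : Prop :=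
  forall s : R,
    derivable_pt_lim th s (3 * sin (th s) * cos (th s) * sin (al s - th s)) /\
    derivable_pt_lim al s (INR q * cos (al s) * cos (th s) - INR p * sin (al s) * sin (th s)).

Definition R2 (t a : R) : Prop :=
  0 <= t <= PI / 2 /\ t + PI / 2 <= a <= t + 3 * PI / 2.

(* Main.v *)
Require Import Defs.
From Stdlib Require Import Reals Lra Psatz.
Open Scope R_scope.

Lemma d_sin f x l : derivable_pt_lim f x l -> derivable_pt_lim (fun t => sin (f t)) x (cos (f x) * l).
Proof. intro H. exact (derivable_pt_lim_comp f sin x l (cos (f x)) H (derivable_pt_lim_sin (f x))). Qed.
Lemma d_cos f x l : derivable_pt_lim f x l -> derivable_pt_lim (fun t => cos (f t)) x (- sin (f x) * l).
Proof. intro H. exact (derivable_pt_lim_comp f cos x l _ H (derivable_pt_lim_cos (f x))). Qed.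
Lemma d_mul f g x a b : derivable_pt_lim f x a -> derivable_pt_lim g x b ->
  derivable_pt_lim (fun t => f t * g t) x (a * g x + f x * b).
Proof. intros. exact (derivable_pt_lim_mult f g x a b H H0). Qed.
Lemma d_sub f g x a b : derivable_pt_lim f x a -> derivable_pt_lim g x b ->
  derivable_pt_lim (fun t => f t - g t) x (a - b).
Proof. intros. exact (derivable_pt_lim_minus f g x a b H H0). Qed.
Lemma d_const k x : derivable_pt_lim (fun _ => k) x 0.
Proof. exact (derivable_pt_lim_const k x). Qed.
Lemma d_explin k x : derivable_pt_lim (fun t => exp (k * t)) x (exp (k * x) * k).
Proof.
  assert (H : derivable_pt_lim (fun t => k * t) x k).
  { pose proof (derivable_pt_lim_scal id k x 1 (derivable_pt_lim_id x)) as H.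
    rewrite Rmult_1_r in H. exact H. }
  exact (derivable_pt_lim_comp (fun t => k * t) exp x k _ H (derivable_pt_lim_exp (k * x))).
Qed.
Lemma d_ext f x l l' : derivable_pt_lim f x l -> l = l' -> derivable_pt_lim f x l'.
Proof. intros H ->; exact H. Qed.

Lemma cont_of f : (forall x, exists l, derivable_pt_lim f x l) -> continuity f.
Proof. intros H x. destruct (H x) as [l Hl]. apply derivable_continuous_pt. exists l; exact Hl. Qed.

Lemma cont_ed f x : (exists l, derivable_pt_lim f x l) -> forall e, 0 < e ->
  exists d, 0 < d /\ forall y, Rabs (y - x) < d -> Rabs (f y - f x) < e.
Proof.
  intros [l Hl] e He.
  assert (Hc : continuity_pt f x) by (apply derivable_continuous_pt; exists l; exact Hl).
  destruct (Hc e He) as [d [Hd H']]. exists d; split; auto. intros y Hy.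
  destruct (Req_dec y x) as [->|n].
  - unfold Rminus; rewrite Rplus_opp_r, Rabs_R0; lra.
  - apply H'. split; [split; [exact I | auto] | exact Hy].
Qed.

Lemma mono (F F' : R -> R) : (forall t, derivable_pt_lim F t (F' t)) -> (forall t, F' t <= 0) ->
  forall a b, a <= b -> F b <= F a.
Proof.
  intros HD HN a b Hab. destruct (Req_dec a b) as [->|n]; [lra|].
  destruct (MVT_cor2 F F' a b ltac:(lra) (fun c _ => HD c)) as [c [Hc _]].
  specialize (HN c). nra.
Qed.

Lemma barrier (f f' : R -> R) s0 : (forall t, derivable_pt_lim f t (f' t)) -> f s0 <= 0 ->
  (forall t, t <= s0 -> f t = 0 -> 0 < f' t) -> forall t, t <= s0 -> f t <= 0.
Proof.
  intros HD H0 HZ t Ht. destruct (Rle_dec (f t) 0) as [|Hp]; auto. exfalso.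
  apply Rnot_le_lt in Hp.
  assert (Hts : t < s0) by (destruct (Req_dec t s0) as [->|]; lra).
  set (E := fun x => t <= x <= s0 /\ forall y, t <= y <= x -> 0 < f y).
  assert (Hb : bound E) by (exists s0; intros x [Hx _]; lra).
  assert (He : exists x, E x) by (exists t; split; [lra| intros y Hy; replace y with t by lra; exact Hp]).
  destruct (completeness E Hb He) as [m [Hub Hlub]].
  assert (Htm : t <= m) by (apply Hub; split; [lra | intros y Hy; replace y with t by lra; exact Hp]).
  assert (Hms : m <= s0) by (apply Hlub; intros x [Hx _]; lra).
  assert (HA : forall y, t <= y < m -> 0 < f y).
  { intros y Hy. destruct (Rle_dec (f y) 0) as [Hn|]; [|lra]. exfalso.
    assert (m <= y); [|lra]. apply Hlub. intros x [Hx Hx']. destruct (Rle_dec x y); auto.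
    specialize (Hx' y ltac:(lra)). lra. }
  assert (HB : 0 <= f m).
  { destruct (Rle_dec 0 (f m)) as [|Hn]; auto. exfalso. apply Rnot_le_lt in Hn.
    destruct (Req_dec m t) as [->|Hmt]; [lra|].
    destruct (cont_ed f m (ex_intro _ _ (HD m)) (- f m) ltac:(lra)) as [d [Hd Hc]].
    set (y := m - Rmin (d/2) ((m - t)/2)).
    assert (Hy1 : Rmin (d/2) ((m-t)/2) <= d/2) by apply Rmin_l.
    assert (Hy2 : Rmin (d/2) ((m-t)/2) <= (m-t)/2) by apply Rmin_r.
    assert (Hy3 : 0 < Rmin (d/2) ((m-t)/2)) by (apply Rmin_case; lra).
    specialize (HA y ltac:(unfold y; lra)).
    specialize (Hc y ltac:(apply Rabs_def1; unfold y; lra)). apply Rabs_def2 in Hc. lra. }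
  assert (HC : f m <= 0).
  { destruct (Rle_dec (f m) 0) as [|Hn]; auto. exfalso. apply Rnot_le_lt in Hn.
    assert (Hm0 : m < s0) by (destruct (Req_dec m s0) as [->|]; lra).
    destruct (cont_ed f m (ex_intro _ _ (HD m)) (f m) Hn) as [d [Hd Hc]].
    set (x := Rmin s0 (m + d/2)).
    assert (Hx1 : x <= s0) by apply Rmin_l.
    assert (Hx2 : x <= m + d/2) by apply Rmin_r.
    assert (Hx3 : m < x) by (apply Rmin_case; lra).
    assert (x <= m); [|lra]. apply Hub. split; [lra|]. intros y Hy.
    destruct (Rlt_le_dec y m). apply HA; lra.
    specialize (Hc y ltac:(apply Rabs_def1; lra)). apply Rabs_def2 in Hc. lra. }
  assert (Hfm : f m = 0) by lra.
  assert (Htm' : t < m) by (destruct (Req_dec t m) as [<-|]; lra).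
  pose proof (HZ m Hms Hfm) as Hd'.
  destruct (HD m (f' m) Hd') as [[d Hd] Hdd]. simpl in Hdd.
  set (h := - Rmin (d/2) ((m - t)/2)).
  assert (Hy1 : Rmin (d/2) ((m-t)/2) <= d/2) by apply Rmin_l.
  assert (Hy2 : Rmin (d/2) ((m-t)/2) <= (m-t)/2) by apply Rmin_r.
  assert (Hy3 : 0 < Rmin (d/2) ((m-t)/2)) by (apply Rmin_case; lra).
  specialize (Hdd h ltac:(unfold h; lra) ltac:(apply Rabs_def1; unfold h; lra)).
  apply Rabs_def2 in Hdd. rewrite Hfm in Hdd.
  specialize (HA (m + h) ltac:(unfold h; lra)).
  destruct Hdd as [_ Hdd].
  assert (Hh : h < 0) by (unfold h; lra).
  assert (Hq : 0 < (f (m + h) - 0) / h) by lra.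
  unfold Rdiv in Hq.
  assert (/ h < 0) by (apply Rinv_lt_0_compat; lra).
  rewrite Rminus_0_r in Hq. nra.
Qed.

Theorem lemma4p8 (p q : nat) (hp : (1 <= p)%nat) (hq : (1 <= q)%nat)
  (th al : R -> R) (htraj : is_trajectory p q th al) (s0 : R)
  (h0 : 0 < th s0 < PI / 2)
  (h1 : th s0 + PI / 2 <= al s0 <= th s0 + 3 * PI / 2) :
  forall s : R, s <= s0 -> R2 (th s) (al s).
Proof.
  set (dth := fun t => 3 * sin (th t) * cos (th t) * sin (al t - th t)).
  set (dal := fun t => INR q * cos (al t) * cos (th t) - INR p * sin (al t) * sin (th t)).
  assert (Dth : forall t, derivable_pt_lim th t (dth t)) by (intro t; exact (proj1 (htraj t))).
  assert (Dal : forall t, derivable_pt_lim al t (dal t)) by (intro t; exact (proj2 (htraj t))).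
  assert (HPI := PI_RGT_0).
  assert (Hs : forall t, t <= s0 -> sin (th t) <> 0).
  { intros t Ht Hz.
    set (F := fun u => sin (th u) * sin (th u) * exp (-6 * u)).
    set (F' := fun u => (cos (th u) * dth u * sin (th u) + sin (th u) * (cos (th u) * dth u)) * exp (-6 * u)
                + sin (th u) * sin (th u) * (exp (-6 * u) * -6)).
    assert (HD : forall u, derivable_pt_lim F u (F' u)).
    { intro u. unfold F, F'. apply (d_mul (fun u => sin (th u) * sin (th u)) (fun u => exp (-6 * u))); [apply (d_mul (fun u => sin (th u)) (fun u => sin (th u))); apply (d_sin th); apply Dth | apply d_explin]. }
    assert (HN : forall u, F' u <= 0).
    { intro u. unfold F', dth. pose proof (exp_pos (-6 * u)). pose proof (SIN_bound (al u - th u)).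
      pose proof (sin2_cos2 (th u)). unfold Rsqr in *.
      set (E := exp (-6*u)) in *. set (s := sin (th u)) in *. set (c := cos (th u)) in *.
      set (w := sin (al u - th u)) in *.
      assert (c * c * w <= 1) by nra.
      replace ((c * (3 * s * c * w) * s + s * (c * (3 * s * c * w))) * E + s * s * (E * -6))
        with ((E * (s * s)) * (6 * (c * c * w) - 6)) by ring.
      assert (0 <= E * (s * s)) by (apply Rmult_le_pos; nra). nra. }
    pose proof (mono F F' HD HN t s0 Ht) as Hm. unfold F in Hm. rewrite Hz in Hm.
    pose proof (sin_gt_0 (th s0) ltac:(lra) ltac:(lra)). pose proof (exp_pos (-6 * s0)).
    assert (0 < sin (th s0) * sin (th s0) * exp (-6 * s0)) by (apply Rmult_lt_0_compat; nra).
    lra. }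
  assert (Hc : forall t, t <= s0 -> cos (th t) <> 0).
  { intros t Ht Hz.
    set (F := fun u => cos (th u) * cos (th u) * exp (-6 * u)).
    set (F' := fun u => (- sin (th u) * dth u * cos (th u) + cos (th u) * (- sin (th u) * dth u)) * exp (-6 * u)
                + cos (th u) * cos (th u) * (exp (-6 * u) * -6)).
    assert (HD : forall u, derivable_pt_lim F u (F' u)).
    { intro u. unfold F, F'. apply (d_mul (fun u => cos (th u) * cos (th u)) (fun u => exp (-6 * u))); [apply (d_mul (fun u => cos (th u)) (fun u => cos (th u))); apply (d_cos th); apply Dth | apply d_explin]. }
    assert (HN : forall u, F' u <= 0).
    { intro u. unfold F', dth. pose proof (exp_pos (-6 * u)). pose proof (SIN_bound (al u - th u)).
      pose proof (sin2_cos2 (th u)). unfold Rsqr in *.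
      set (E := exp (-6*u)) in *. set (s := sin (th u)) in *. set (c := cos (th u)) in *.
      set (w := sin (al u - th u)) in *.
      assert (- (s * s * w) <= 1) by nra.
      replace ((- s * (3 * s * c * w) * c + c * (- s * (3 * s * c * w))) * E + c * c * (E * -6))
        with ((E * (c * c)) * (- 6 * (s * s * w) - 6)) by ring.
      assert (0 <= E * (c * c)) by (apply Rmult_le_pos; nra). nra. }
    pose proof (mono F F' HD HN t s0 Ht) as Hm. unfold F in Hm. rewrite Hz in Hm.
    pose proof (cos_gt_0 (th s0) ltac:(lra) ltac:(lra)). pose proof (exp_pos (-6 * s0)).
    assert (0 < cos (th s0) * cos (th s0) * exp (-6 * s0)) by (apply Rmult_lt_0_compat; nra).
    lra. }
  assert (Cth : continuity th) by (apply cont_of; intro x; eexists; apply Dth).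
  assert (Hth : forall t, t <= s0 -> 0 < th t < PI / 2).
  { intros t Ht. split.
    - destruct (Rle_dec (th t) 0) as [Hn|]; [|lra]. exfalso.
      destruct (Req_dec (th t) 0) as [Hz|Hnz]. { apply (Hs t Ht). rewrite Hz; apply sin_0. }
      assert (t < s0) by (destruct (Req_dec t s0) as [->|]; lra).
      destruct (IVT th t s0 Cth H ltac:(lra) ltac:(lra)) as [z [Hz1 Hz2]].
      apply (Hs z ltac:(lra)). rewrite Hz2; apply sin_0.
    - destruct (Rle_dec (PI/2) (th t)) as [Hn|]; [|lra]. exfalso.
      destruct (Req_dec (th t) (PI/2)) as [Hz|Hnz]. { apply (Hc t Ht). rewrite Hz; apply cos_PI2. }
      assert (t < s0) by (destruct (Req_dec t s0) as [->|]; lra).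
      assert (Cg : continuity (fun u => PI/2 - th u)).
      { apply cont_of; intro x; eexists; apply (d_sub (fun _ => PI/2) th); [apply d_const | apply Dth]. }
      destruct (IVT (fun u => PI/2 - th u) t s0 Cg H ltac:(lra) ltac:(lra)) as [z [Hz1 Hz2]].
      apply (Hc z ltac:(lra)). replace (th z) with (PI/2) by lra; apply cos_PI2. }
  assert (Hcos : forall t, t <= s0 -> cos (al t - th t) <= 0).
  { apply (barrier (fun t => cos (al t - th t)) (fun t => - sin (al t - th t) * (dal t - dth t))).
    - intro t. apply (d_cos (fun t => al t - th t)). apply (d_sub al th); [apply Dal | apply Dth].
    - apply cos_le_0; lra.
    - intros t Ht Hz. destruct (Hth t Ht) as [Ha Hb].
      pose proof (sin_gt_0 (th t) ltac:(lra) ltac:(lra)).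
      pose proof (cos_gt_0 (th t) ltac:(lra) ltac:(lra)).
      pose proof (sin2_cos2 (al t - th t)). unfold Rsqr in *.
      unfold dal, dth.
      replace (al t) with (th t + (al t - th t)) by ring.
      rewrite cos_plus, sin_plus.
      replace (th t + (al t - th t) - th t) with (al t - th t) by ring.
      rewrite Hz in *.
      assert (1 <= INR p) by (apply (le_INR 1); exact hp).
      assert (1 <= INR q) by (apply (le_INR 1); exact hq).
      set (s := sin (th t)) in *. set (c := cos (th t)) in *. set (w := sin (al t - th t)) in *.
      replace (- w * (INR q * (c * 0 - s * w) * c - INR p * (s * 0 + c * w) * s - 3 * s * c * w))
        with ((INR q + INR p + 3) * (s * c) * (w * w)) by ring.
      assert (w * w = 1) by lra. rewrite H4.
      assert (0 < s * c) by nra. nra. }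
  assert (Cg : continuity (fun u => al u - th u)).
  { apply cont_of; intro x; eexists; apply (d_sub al th); [apply Dal | apply Dth]. }
  intros t Ht. destruct (Hth t Ht) as [Ha Hb]. pose proof (Hcos t Ht) as Hct.
  assert (Hlo : PI/2 <= al t - th t).
  { destruct (Rle_dec (PI/2) (al t - th t)) as [|Hn]; auto. exfalso. apply Rnot_le_lt in Hn.
    destruct (Rle_dec 0 (al t - th t)) as [H0|H0].
    - pose proof (cos_gt_0 (al t - th t) ltac:(lra) Hn). lra.
    - assert (t < s0) by (destruct (Req_dec t s0) as [->|]; lra).
      destruct (IVT (fun u => al u - th u) t s0 Cg H ltac:(lra) ltac:(lra)) as [z [Hz1 Hz2]].
      pose proof (Hcos z ltac:(lra)). simpl in Hz2. rewrite Hz2, cos_0 in H1. lra. }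
  assert (Hhi : al t - th t <= 3 * (PI/2)).
  { destruct (Rle_dec (al t - th t) (3 * (PI/2))) as [|Hn]; auto. exfalso. apply Rnot_le_lt in Hn.
    destruct (Rle_dec (al t - th t) (2 * PI)) as [H0|H0].
    - assert (Heq : cos (al t - th t) = cos (al t - th t - 2 * PI)).
      { replace (al t - th t) with ((al t - th t - 2 * PI) + 2 * PI) at 1 by ring.
        rewrite cos_plus, cos_2PI, sin_2PI. ring. }
      pose proof (cos_gt_0 (al t - th t - 2 * PI) ltac:(lra) ltac:(lra)). lra.
    - assert (t < s0) by (destruct (Req_dec t s0) as [->|]; lra).
      assert (Cg2 : continuity (fun u => 2 * PI - (al u - th u))).
      { apply cont_of; intro x; eexists; apply (d_sub (fun _ => 2*PI) (fun u => al u - th u)); [apply d_const | apply (d_sub al th); [apply Dal | apply Dth]]. }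
      destruct (IVT _ t s0 Cg2 H ltac:(lra) ltac:(lra)) as [z [Hz1 Hz2]].
      pose proof (Hcos z ltac:(lra)). replace (al z - th z) with (2 * PI) in H1 by lra.
      rewrite cos_2PI in H1. lra. }
  unfold R2. lra.
Qed.
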